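(* Consider the problem $\min\{F(x,z): x\in\operatorname{conv}(X),\ z\in Z\}$ where $F:\mathbb{R}^n\times\mathbb{R}^q\to\mathbb{R}$ is convex and continuously differentiable, $X\subset\mathbb{R}^n$ is nonempty and compact (so $\operatorname{conv}(X)$ is convex and compact), $Z\subseteq\mathbb{R}^q$ is nonempty, closed and convex, and for each $x\in\operatorname{conv}(X)$ the map $z\mapsto F(x,z)$ is inf-compact on $Z$. Fix an integer $t_{\max}\ge1$. Let $x^0\in\operatorname{conv}(X)$, $z^0\in\arg\min_{z\in Z}F(x^0,z)$, and $D^0\subseteq\operatorname{conv}(X)$ be a nonempty closed convex set. For $k=0,1,2,\dots$ perform one SDM-GS iteration: set $(\tilde x,\tilde z)=(x^k,z^k)$; for $t=1,\dots,t_{\max}$ let $\tilde x\in\arg\min\{F(x,\tilde z): x\in D^k\}$ and then $\tilde z\in\arg\min\{F(\tilde x,z): z\in Z\}$; set $(x^{k+1},z^{k+1})=(\tilde x,\tilde z)$; choose $\hat x^{k+1}\in\arg\min\{\nabla_x F(x^{k+1},z^{k+1})(x-x^{k+1}): x\in X\}$; and let $D^{k+1}$ be any closed convex set with $\{x^{k+1}+\alpha(\hat x^{k+1}-x^{k+1}):\alpha\in[0,1]\}\subseteq D^{k+1}\subseteq\operatorname{conv}(X)$. Then the sequence $\{(x^k,z^k)\}$ has limit points, and every limit point $(\bar x,\bar z)$ is an optimal solution of $\min\{F(x,z): x\in\operatorname{conv}(X),\ z\in Z\}$.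
   Context: A function $z\mapsto g(z)$ is inf-compact on $Z$ if for every $\ell\in\mathbb{R}$ the set $\{z\in Z: g(z)\le\ell\}$ is compact. $\nabla_x F(x,z)$ denotes the partial gradient with respect to $x$, viewed as a row vector. *)

(* Defs.v *)
From Stdlib Require Import Reals Lra List.
From Stdlib Require Fin.
Open Scope R_scope.

Definition vec (n : nat) := Fin.t n -> R.

Definition vadd {n} (u v : vec n) : vec n := fun i => u i + v i.
Definition vsub {n} (u v : vec n) : vec n := fun i => u i - v i.
Definition vscal {n} (a : R) (u : vec n) : vec n := fun i => a * u i.
Definition vzero {n} : vec n := fun _ => 0.

Fixpoint vsum (n : nat) : (Fin.t n -> R) -> R :=
  match n with
  | O => fun _ => 0
  | S m => fun f => f Fin.F1 + vsum m (fun i => f (Fin.FS i))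
  end.

Definition dot {n} (u v : vec n) : R := vsum n (fun i => u i * v i).
Definition norm {n} (u : vec n) : R := sqrt (dot u u).

Definition vconv {n} (u : nat -> vec n) (l : vec n) : Prop :=
  forall eps, eps > 0 -> exists N, forall k, (k >= N)%nat -> norm (vsub (u k) l) < eps.

Definition is_closed {n} (S : vec n -> Prop) : Prop :=
  forall (u : nat -> vec n) l, (forall k, S (u k)) -> vconv u l -> S l.

Definition strictly_increasing (phi : nat -> nat) : Prop :=
  forall k, (phi k < phi (S k))%nat.

Definition is_compact {n} (S : vec n -> Prop) : Prop :=
  forall u : nat -> vec n, (forall k, S (u k)) ->
    exists phi l, strictly_increasing phi /\ S l /\ vconv (fun k => u (phi k)) l.

Definition is_convex {n} (S : vec n -> Prop) : Prop :=
  forall u v a, S u -> S v -> 0 <= a <= 1 ->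
    S (vadd (vscal a u) (vscal (1 - a) v)).

Definition nonempty {n} (S : vec n -> Prop) : Prop := exists u, S u.
Definition subset {n} (A B : vec n -> Prop) : Prop := forall u, A u -> B u.

Fixpoint lcomb {n} (l : list (R * vec n)) : vec n :=
  match l with
  | nil => vzero
  | (a, p) :: l' => vadd (vscal a p) (lcomb l')
  end.

Definition conv {n} (X : vec n -> Prop) : vec n -> Prop :=
  fun x => exists l : list (R * vec n),
    Forall (fun ap => 0 <= fst ap /\ X (snd ap)) l /\
    fold_right Rplus 0 (map fst l) = 1 /\
    x = lcomb l.

Definition jointly_convex {n q} (F : vec n -> vec q -> R) : Prop :=
  forall x1 z1 x2 z2 a, 0 <= a <= 1 ->
    F (vadd (vscal a x1) (vscal (1 - a) x2)) (vadd (vscal a z1) (vscal (1 - a) z2))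
    <= a * F x1 z1 + (1 - a) * F x2 z2.

Definition has_gradient {n q} (F : vec n -> vec q -> R) (x : vec n) (z : vec q)
  (gx : vec n) (gz : vec q) : Prop :=
  forall eps, eps > 0 -> exists delta, delta > 0 /\
    forall x' z', sqrt (Rsqr (norm (vsub x' x)) + Rsqr (norm (vsub z' z))) < delta ->
      Rabs (F x' z' - F x z - dot gx (vsub x' x) - dot gz (vsub z' z))
      <= eps * sqrt (Rsqr (norm (vsub x' x)) + Rsqr (norm (vsub z' z))).

Definition continuous2 {n q m} (G : vec n -> vec q -> vec m) : Prop :=
  forall x z eps, eps > 0 -> exists delta, delta > 0 /\
    forall x' z', sqrt (Rsqr (norm (vsub x' x)) + Rsqr (norm (vsub z' z))) < delta ->
      norm (vsub (G x' z') (G x z)) < eps.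

Definition C1_with_gradient {n q} (F : vec n -> vec q -> R)
  (Gx : vec n -> vec q -> vec n) (Gz : vec n -> vec q -> vec q) : Prop :=
  (forall x z, has_gradient F x z (Gx x z) (Gz x z)) /\
  continuous2 Gx /\ continuous2 Gz.

Definition is_argmin {n} (S : vec n -> Prop) (f : vec n -> R) (u : vec n) : Prop :=
  S u /\ forall v, S v -> f u <= f v.

Definition inf_compact {q} (Z : vec q -> Prop) (g : vec q -> R) : Prop :=
  forall l : R, is_compact (fun z => Z z /\ g z <= l).

Definition segment {n} (a b : vec n) : vec n -> Prop :=
  fun y => exists al, 0 <= al <= 1 /\ y = vadd a (vscal al (vsub b a)).

Definition is_limit_point {n q} (x : nat -> vec n) (z : nat -> vec q)
  (xb : vec n) (zb : vec q) : Prop :=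
  exists phi, strictly_increasing phi /\
    vconv (fun k => x (phi k)) xb /\ vconv (fun k => z (phi k)) zb.

Definition is_optimal {n q} (F : vec n -> vec q -> R) (C : vec n -> Prop)
  (Z : vec q -> Prop) (xb : vec n) (zb : vec q) : Prop :=
  C xb /\ Z zb /\ forall x z, C x -> Z z -> F xb zb <= F x z.

(* Main.v *)
Require Import Defs.
From Stdlib Require Import Reals Lra List.
From Stdlib Require Import Lia FunctionalExtensionality ClassicalEpsilon Classical.
From Stdlib Require Fin.
Open Scope R_scope.


Lemma vsum_ext : forall n (f g : Fin.t n -> R), (forall i, f i = g i) -> vsum n f = vsum n g.
Proof. induction n; intros f g H; simpl; [reflexivity|]. rewrite H. f_equal. apply IHn. intros; apply H. Qed.

Lemma vsum_plus : forall n (f g : Fin.t n -> R), vsum n (fun i => f i + g i) = vsum n f + vsum n g.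
Proof. induction n; intros f g; simpl; [lra|]. rewrite IHn. lra. Qed.

Lemma vsum_scal : forall n a (f : Fin.t n -> R), vsum n (fun i => a * f i) = a * vsum n f.
Proof. induction n; intros a f; simpl; [lra|]. rewrite IHn. lra. Qed.

Lemma vsum_zero : forall n, vsum n (fun _ => 0) = 0.
Proof. induction n; simpl; [lra|]. rewrite IHn. lra. Qed.

Lemma vsum_le : forall n (f g : Fin.t n -> R), (forall i, f i <= g i) -> vsum n f <= vsum n g.
Proof. induction n; intros f g H; simpl; [lra|]. specialize (IHn (fun i => f (Fin.FS i)) (fun i => g (Fin.FS i))).
  assert (H1 := H Fin.F1). assert (vsum n (fun i => f (Fin.FS i)) <= vsum n (fun i => g (Fin.FS i))) by (apply IHn; intros; apply H). lra. Qed.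

Lemma vsum_nonneg : forall n (f : Fin.t n -> R), (forall i, 0 <= f i) -> 0 <= vsum n f.
Proof. intros. apply Rle_trans with (vsum n (fun _ => 0)); [rewrite vsum_zero; lra|]. apply vsum_le. auto. Qed.

Lemma vsum_ge_term : forall n (f : Fin.t n -> R), (forall i, 0 <= f i) -> forall i, f i <= vsum n f.
Proof. intros n f H i. induction i as [m|m i IH]; simpl.
  - assert (0 <= vsum m (fun i => f (Fin.FS i))) by (apply vsum_nonneg; intros; apply H). lra.
  - specialize (IH (fun j => f (Fin.FS j))). simpl in IH. assert (H1 := H Fin.F1).
    assert (f (Fin.FS i) <= vsum m (fun i0 => f (Fin.FS i0))) by (apply IH; intros; apply H). lra. Qed.

Lemma dot_comm : forall n (u v : vec n), dot u v = dot v u.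
Proof. intros. unfold dot. apply vsum_ext. intros; ring. Qed.

Lemma dot_add_r : forall n (u v w : vec n), dot u (vadd v w) = dot u v + dot u w.
Proof. intros. unfold dot, vadd. rewrite <- vsum_plus. apply vsum_ext. intros; ring. Qed.

Lemma dot_add_l : forall n (u v w : vec n), dot (vadd v w) u = dot v u + dot w u.
Proof. intros. unfold dot, vadd. rewrite <- vsum_plus. apply vsum_ext. intros; ring. Qed.

Lemma dot_sub_r : forall n (u v w : vec n), dot u (vsub v w) = dot u v - dot u w.
Proof. intros. unfold dot, vsub. replace (vsum n (fun i => u i * v i) - vsum n (fun i => u i * w i))
  with (vsum n (fun i => u i * v i) + (-1) * vsum n (fun i => u i * w i)) by ring.
  rewrite <- vsum_scal, <- vsum_plus. apply vsum_ext. intros; ring. Qed.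

Lemma dot_sub_l : forall n (u v w : vec n), dot (vsub v w) u = dot v u - dot w u.
Proof. intros. rewrite !(dot_comm _ _ u). apply dot_sub_r. Qed.

Lemma dot_scal_r : forall n a (u v : vec n), dot u (vscal a v) = a * dot u v.
Proof. intros. unfold dot, vscal. rewrite <- vsum_scal. apply vsum_ext. intros; ring. Qed.

Lemma dot_scal_l : forall n a (u v : vec n), dot (vscal a v) u = a * dot v u.
Proof. intros. unfold dot, vscal. rewrite <- vsum_scal. apply vsum_ext. intros; ring. Qed.

Lemma dot_zero_r : forall n (u : vec n), dot u vzero = 0.
Proof. intros. unfold dot, vzero. transitivity (vsum n (fun _ => 0)); [apply vsum_ext; intros; ring|apply vsum_zero]. Qed.

Lemma dot_self_nonneg : forall n (u : vec n), 0 <= dot u u.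
Proof. intros. apply vsum_nonneg. intros. apply Rle_0_sqr. Qed.

Lemma coord_sq_le : forall n (u : vec n) i, u i * u i <= dot u u.
Proof. intros. apply (vsum_ge_term n (fun i => u i * u i)). intros; apply Rle_0_sqr. Qed.

Lemma norm_nonneg : forall n (u : vec n), 0 <= norm u.
Proof. intros; apply sqrt_pos. Qed.

Lemma norm_sq : forall n (u : vec n), norm u * norm u = dot u u.
Proof. intros. unfold norm. apply sqrt_sqrt. apply dot_self_nonneg. Qed.

Lemma coord_le_norm : forall n (u : vec n) i, Rabs (u i) <= norm u.
Proof. intros. unfold norm. rewrite <- sqrt_Rsqr_abs. apply sqrt_le_1_alt. unfold Rsqr. apply coord_sq_le. Qed.

Lemma norm_zero_coord : forall n (u : vec n), norm u = 0 -> forall i, u i = 0.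
Proof. intros. pose proof (coord_le_norm n u i). pose proof (Rabs_pos (u i)).
  assert (Rabs (u i) = 0) by lra. destruct (Req_dec (u i) 0); auto. exfalso. apply Rabs_no_R0 in H3. auto. Qed.

Lemma dot_norm0 : forall n (u v : vec n), norm u = 0 -> dot u v = 0.
Proof. intros. unfold dot. transitivity (vsum n (fun _ => 0)); [|apply vsum_zero]. apply vsum_ext. intros. rewrite (norm_zero_coord n u H i). ring. Qed.

Lemma cauchy_schwarz : forall n (u v : vec n), Rabs (dot u v) <= norm u * norm v.
Proof. intros.
  destruct (Req_dec (norm u) 0) as [Hu|Hu]. { rewrite dot_norm0 by auto. rewrite Rabs_R0, Hu. lra. }
  destruct (Req_dec (norm v) 0) as [Hv|Hv]. { rewrite dot_comm, dot_norm0 by auto. rewrite Rabs_R0, Hv. lra. }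
  pose proof (norm_nonneg n u). pose proof (norm_nonneg n v).
  set (a := norm u) in *. set (b := norm v) in *.
  assert (Ha : a > 0) by lra. assert (Hb : b > 0) by lra.
  assert (E1 := dot_self_nonneg n (vsub (vscal b u) (vscal a v))).
  assert (E2 := dot_self_nonneg n (vadd (vscal b u) (vscal a v))).
  rewrite dot_sub_l, !dot_sub_r, !dot_scal_l, !dot_scal_r in E1.
  rewrite dot_add_l, !dot_add_r, !dot_scal_l, !dot_scal_r in E2.
  rewrite (dot_comm _ v u) in E1, E2. rewrite <- !norm_sq in E1, E2. fold a b in E1, E2.
  assert (a*b*(dot u v) <= a*b*(a*b)) by nra.
  assert (a*b*(- dot u v) <= a*b*(a*b)) by nra.
  apply Rabs_le. split.
  - assert (- dot u v <= a*b) by (apply Rmult_le_reg_l with (a*b); nra). lra.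
  - apply Rmult_le_reg_l with (a*b); nra.
Qed.

Lemma vec_ext : forall n (u v : vec n), (forall i, u i = v i) -> u = v.
Proof. intros. apply functional_extensionality. auto. Qed.

Lemma sqrt_le_of_sq : forall x c, 0 <= c -> x <= c * c -> sqrt x <= c.
Proof. intros. rewrite <- (sqrt_square c) by auto. destruct (Rle_lt_dec 0 x).
  - apply sqrt_le_1; auto. nra.
  - rewrite sqrt_neg_0 by lra. apply sqrt_pos. Qed.

Lemma norm_le_of_sq : forall n (u : vec n) c, 0 <= c -> dot u u <= c * c -> norm u <= c.
Proof. intros. apply sqrt_le_of_sq; auto. Qed.

Lemma norm_triangle : forall n (u v : vec n), norm (vadd u v) <= norm u + norm v.
Proof. intros. apply norm_le_of_sq. pose proof (norm_nonneg n u); pose proof (norm_nonneg n v); lra.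
  rewrite dot_add_l, !dot_add_r. rewrite (dot_comm _ v u). pose proof (cauchy_schwarz n u v).
  pose proof (Rle_abs (dot u v)). rewrite <- !norm_sq. nra. Qed.

Lemma norm_scal : forall n a (u : vec n), norm (vscal a u) = Rabs a * norm u.
Proof. intros. unfold norm. rewrite dot_scal_l, dot_scal_r. rewrite <- Rmult_assoc.
  rewrite sqrt_mult_alt. replace (a*a) with (Rsqr a) by reflexivity. rewrite sqrt_Rsqr_abs. reflexivity.
  apply Rle_0_sqr. Qed.

Lemma vsub_eq : forall n (u v : vec n), vsub u v = vadd u (vscal (-1) v).
Proof. intros. apply vec_ext. intros. unfold vsub, vadd, vscal. ring. Qed.

Lemma norm_opp_sub : forall n (u v : vec n), norm (vsub u v) = norm (vsub v u).
Proof. intros. replace (vsub u v) with (vscal (-1) (vsub v u)). rewrite norm_scal. replace (Rabs (-1)) with 1. ring. rewrite Rabs_left by lra; ring.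
  apply vec_ext. intros. unfold vsub, vscal. ring. Qed.

Lemma norm_sub_triangle : forall n (u v w : vec n), norm (vsub u w) <= norm (vsub u v) + norm (vsub v w).
Proof. intros. replace (vsub u w) with (vadd (vsub u v) (vsub v w)). apply norm_triangle.
  apply vec_ext. intros. unfold vsub, vadd. ring. Qed.

Lemma norm_sub_le : forall n (u v : vec n), norm (vsub u v) <= norm u + norm v.
Proof. intros. rewrite vsub_eq. eapply Rle_trans. apply norm_triangle. rewrite norm_scal. replace (Rabs (-1)) with 1. lra. rewrite Rabs_left by lra; ring. Qed.

Lemma norm_zero : forall n, norm (@vzero n) = 0.
Proof. intros. replace (@vzero n) with (vscal 0 (@vzero n)). rewrite norm_scal, Rabs_R0. ring.
  apply vec_ext; intros; unfold vscal, vzero; ring. Qed.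

Lemma norm_self_sub : forall n (u : vec n), norm (vsub u u) = 0.
Proof. intros. replace (vsub u u) with (@vzero n). apply norm_zero. apply vec_ext; intros; unfold vsub, vzero; ring. Qed.

Definition vtail {m} (v : vec (S m)) : vec m := fun i => v (Fin.FS i).

Lemma dot_S : forall m (u v : vec (S m)), dot u v = u Fin.F1 * v Fin.F1 + dot (vtail u) (vtail v).
Proof. intros. reflexivity. Qed.

Lemma norm_S_le : forall m (v : vec (S m)), norm v <= Rabs (v Fin.F1) + norm (vtail v).
Proof. intros. apply norm_le_of_sq. pose proof (Rabs_pos (v Fin.F1)); pose proof (norm_nonneg _ (vtail v)); lra.
  rewrite dot_S. rewrite <- norm_sq. pose proof (Rabs_pos (v Fin.F1)); pose proof (norm_nonneg _ (vtail v)).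
  assert (v Fin.F1 * v Fin.F1 = Rabs (v Fin.F1) * Rabs (v Fin.F1)). { rewrite <- Rabs_mult. rewrite Rabs_right. ring. pose proof (Rle_0_sqr (v Fin.F1)). unfold Rsqr in *. lra. }
  nra. Qed.

Lemma norm_tail_le : forall m (v : vec (S m)), norm (vtail v) <= norm v.
Proof. intros. unfold norm at 2. rewrite dot_S. apply sqrt_le_1_alt. pose proof (Rle_0_sqr (v Fin.F1)); unfold Rsqr in *. lra. Qed.

Definition pnorm {n q} (x : vec n) (z : vec q) := sqrt (Rsqr (norm x) + Rsqr (norm z)).

Lemma pnorm_le : forall n q (x : vec n) (z : vec q), pnorm x z <= norm x + norm z.
Proof. intros. unfold pnorm. apply sqrt_le_of_sq. pose proof (norm_nonneg _ x); pose proof (norm_nonneg _ z); lra.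
  pose proof (norm_nonneg _ x); pose proof (norm_nonneg _ z); unfold Rsqr; nra. Qed.

Lemma pnorm_ge_l : forall n q (x : vec n) (z : vec q), norm x <= pnorm x z.
Proof. intros. unfold pnorm. rewrite <- (sqrt_Rsqr (norm x)) at 1 by apply norm_nonneg. apply sqrt_le_1_alt.
  pose proof (Rle_0_sqr (norm z)). lra. Qed.

Lemma pnorm_ge_r : forall n q (x : vec n) (z : vec q), norm z <= pnorm x z.
Proof. intros. unfold pnorm. rewrite <- (sqrt_Rsqr (norm z)) at 1 by apply norm_nonneg. apply sqrt_le_1_alt.
  pose proof (Rle_0_sqr (norm x)). lra. Qed.

Lemma pnorm_nonneg : forall n q (x : vec n) (z : vec q), 0 <= pnorm x z.
Proof. intros; apply sqrt_pos. Qed.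


Lemma Rabs_le_inv : forall a b, Rabs a <= b -> -b <= a <= b.
Proof. intros. pose proof (Rle_abs a). pose proof (Rle_abs (-a)). rewrite Rabs_Ropp in H1. lra. Qed.

Definition rconv (u : nat -> R) (l : R) : Prop :=
  forall eps, eps > 0 -> exists N, forall k, (k >= N)%nat -> Rabs (u k - l) < eps.

Lemma si_ge : forall phi, strictly_increasing phi -> forall k, (k <= phi k)%nat.
Proof. intros phi H k. induction k; [lia|]. specialize (H k). lia. Qed.

Lemma si_mono : forall phi, strictly_increasing phi -> forall a b, (a <= b)%nat -> (phi a <= phi b)%nat.
Proof. intros phi H a b Hab. induction Hab; [lia|]. specialize (H m). lia. Qed.

Lemma si_comp : forall phi psi, strictly_increasing phi -> strictly_increasing psi ->
  strictly_increasing (fun k => phi (psi k)).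
Proof. intros phi psi H1 H2 k. unfold strictly_increasing in *.
  assert (forall a b, (a < b)%nat -> (phi a < phi b)%nat).
  { intros a b Hab. induction Hab. apply H1. specialize (H1 m). lia. }
  apply H. apply H2. Qed.

Lemma vconv_sub : forall n (u : nat -> vec n) l phi, strictly_increasing phi -> vconv u l ->
  vconv (fun k => u (phi k)) l.
Proof. intros n u l phi Hphi H eps Heps. destruct (H eps Heps) as [N HN]. exists N. intros k Hk.
  apply HN. pose proof (si_ge phi Hphi k). lia. Qed.

Lemma rconv_sub : forall (u : nat -> R) l phi, strictly_increasing phi -> rconv u l ->
  rconv (fun k => u (phi k)) l.
Proof. intros u l phi Hphi H eps Heps. destruct (H eps Heps) as [N HN]. exists N. intros k Hk.
  apply HN. pose proof (si_ge phi Hphi k). lia. Qed.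

Lemma vconv_unique : forall n (u : nat -> vec n) l1 l2, vconv u l1 -> vconv u l2 -> l1 = l2.
Proof. intros n u l1 l2 H H0.
  assert (Hz : norm (vsub l1 l2) = 0).
  { pose proof (norm_nonneg _ (vsub l1 l2)). destruct (Req_dec (norm (vsub l1 l2)) 0); auto.
    set (e := norm (vsub l1 l2)) in *. exfalso.
    destruct (H (e/2)) as [N1 H1']. lra. destruct (H0 (e/2)) as [N2 H2']. lra.
    specialize (H1' (max N1 N2) ltac:(lia)). specialize (H2' (max N1 N2) ltac:(lia)).
    pose proof (norm_sub_triangle _ l1 (u (max N1 N2)) l2). rewrite norm_opp_sub in H1'. fold e in H3. lra. }
  apply vec_ext. intros i. pose proof (norm_zero_coord _ _ Hz i). unfold vsub in H1. lra.
Qed.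

Lemma rconv_unique : forall (u : nat -> R) l1 l2, rconv u l1 -> rconv u l2 -> l1 = l2.
Proof. intros. destruct (Req_dec l1 l2); auto. exfalso. set (e := Rabs (l1 - l2)).
  assert (e > 0) by (apply Rabs_pos_lt; lra).
  destruct (H (e/2)) as [N1 H1']. lra. destruct (H0 (e/2)) as [N2 H2']. lra.
  specialize (H1' (max N1 N2) ltac:(lia)). specialize (H2' (max N1 N2) ltac:(lia)).
  unfold e in *. 
  assert (Rabs (l1 - l2) <= Rabs (u (max N1 N2) - l1) + Rabs (u (max N1 N2) - l2)).
  { replace (l1 - l2) with (-(u (max N1 N2) - l1) + (u (max N1 N2) - l2)) by ring.
    eapply Rle_trans. apply Rabs_triang. rewrite Rabs_Ropp. lra. }
  lra. Qed.

Lemma rconv_le : forall (u v : nat -> R) a b, rconv u a -> rconv v b -> (forall k, u k <= v k) -> a <= b.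
Proof. intros. destruct (Rle_lt_dec a b); auto. exfalso.
  destruct (H ((a-b)/2)) as [N1 H1']. lra. destruct (H0 ((a-b)/2)) as [N2 H2']. lra.
  specialize (H1' (max N1 N2) ltac:(lia)). specialize (H2' (max N1 N2) ltac:(lia)).
  specialize (H1 (max N1 N2)). apply Rabs_def2 in H1'. apply Rabs_def2 in H2'. lra. Qed.

Lemma rconv_le_ev : forall (u v : nat -> R) a b K, rconv u a -> rconv v b -> (forall k, (k >= K)%nat -> u k <= v k) -> a <= b.
Proof. intros. destruct (Rle_lt_dec a b); auto. exfalso.
  destruct (H ((a-b)/2)) as [N1 H1']. lra. destruct (H0 ((a-b)/2)) as [N2 H2']. lra.
  specialize (H1' (max K (max N1 N2)) ltac:(lia)). specialize (H2' (max K (max N1 N2)) ltac:(lia)).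
  specialize (H1 (max K (max N1 N2)) ltac:(lia)). apply Rabs_def2 in H1'. apply Rabs_def2 in H2'. lra. Qed.

Lemma extract : forall (P : nat -> nat -> Prop), (forall N k, exists p, (N <= p)%nat /\ P k p) ->
  exists phi, strictly_increasing phi /\ forall k, P k (phi k).
Proof. intros P H.
  assert (sel : forall N k, {p | (N <= p)%nat /\ P k p}) by (intros; apply constructive_indefinite_description; auto).
  set (phi := fix f (k : nat) : nat := match k with O => proj1_sig (sel O O) | S k' => proj1_sig (sel (S (f k')) (S k')) end).
  exists phi. split.
  - intro k. change (phi k < proj1_sig (sel (S (phi k)) (S k)))%nat.
    pose proof (proj2_sig (sel (S (phi k)) (S k))). simpl in H0. lia.
  - intro k. destruct k. exact (proj2 (proj2_sig (sel O O))).
    exact (proj2 (proj2_sig (sel (S (phi k)) (S k)))). Qed.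

Lemma BW1 : forall (u : nat -> R) M, (forall k, Rabs (u k) <= M) ->
  exists phi l, strictly_increasing phi /\ rconv (fun k => u (phi k)) l.
Proof. intros u M H.
  destruct (Bolzano_Weierstrass u (fun c => -M <= c <= M) (compact_P3 (-M) M)) as [l Hl].
  { intro k. specialize (H k). apply Rabs_le_inv in H. auto. }
  assert (HP : forall N k, exists p, (N <= p)%nat /\ Rabs (u p - l) < / INR (S k)).
  { intros N k. assert (Hpos : 0 < / INR (S k)) by (apply Rinv_0_lt_compat; apply lt_0_INR; lia).
    destruct (Hl (disc l (mkposreal _ Hpos)) N) as [p [Hp1 Hp2]].
    exists (mkposreal _ Hpos). intros y Hy. auto.
    exists p. split; auto. }
  destruct (extract _ HP) as [phi [Hphi Hphi2]]. exists phi, l. split; auto.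
  intros eps Heps. destruct (archimed (/eps)) as [Ha _].
  destruct (INR_unbounded (/eps)) as [N HN]. exists N. intros k Hk.
  eapply Rlt_le_trans. apply Hphi2. 
  assert (INR (S k) > / eps). { apply Rlt_le_trans with (INR N); auto. apply le_INR. lia. }
  assert (0 < /eps) by (apply Rinv_0_lt_compat; lra).
  rewrite <- (Rinv_inv eps). apply Rlt_le. apply Rinv_lt_contravar; auto. nra. Qed.

Definition vcons {m} (a : R) (v : vec m) : vec (S m) := fun i => Fin.caseS' i (fun _ => R) a v.

Lemma vcons_F1 : forall m a (v : vec m), vcons a v Fin.F1 = a.
Proof. reflexivity. Qed.
Lemma vcons_FS : forall m a (v : vec m) i, vcons a v (Fin.FS i) = v i.
Proof. reflexivity. Qed.

Lemma BWn : forall n (u : nat -> vec n) M, (forall k, norm (u k) <= M) ->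
  exists phi l, strictly_increasing phi /\ vconv (fun k => u (phi k)) l.
Proof. induction n; intros u M H.
  - exists (fun k => k), vzero. split. intro; lia. intros eps Heps. exists O. intros.
    unfold norm, dot. simpl. rewrite sqrt_0. lra.
  - destruct (BW1 (fun k => u k Fin.F1) M) as [phi1 [l1 [Hp1 Hc1]]].
    { intro k. eapply Rle_trans. apply coord_le_norm. auto. }
    destruct (IHn (fun k => vtail (u (phi1 k))) M) as [phi2 [l2 [Hp2 Hc2]]].
    { intro k. eapply Rle_trans. apply norm_tail_le. auto. }
    exists (fun k => phi1 (phi2 k)), (vcons l1 l2). split. apply si_comp; auto.
    intros eps Heps. destruct (rconv_sub _ _ _ Hp2 Hc1 (eps/2)) as [N1 HN1]. lra.
    destruct (Hc2 (eps/2)) as [N2 HN2]. lra. exists (max N1 N2). intros k Hk.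
    eapply Rle_lt_trans. apply norm_S_le. specialize (HN1 k ltac:(lia)). specialize (HN2 k ltac:(lia)).
    simpl in HN1. change (Rabs (u (phi1 (phi2 k)) Fin.F1 - l1) + norm (vsub (vtail (u (phi1 (phi2 k)))) l2) < eps). lra.
Qed.


Definition Ssum {T} (h : T -> R) (l : list T) : R := fold_right Rplus 0 (map h l).

Lemma Ssum_nil : forall T (h : T -> R), Ssum h nil = 0.
Proof. reflexivity. Qed.
Lemma Ssum_cons : forall T (h : T -> R) a l, Ssum h (a :: l) = h a + Ssum h l.
Proof. reflexivity. Qed.
Lemma Ssum_app : forall T (h : T -> R) l1 l2, Ssum h (l1 ++ l2) = Ssum h l1 + Ssum h l2.
Proof. induction l1; intros; simpl; [unfold Ssum; simpl; lra|]. rewrite !Ssum_cons, IHl1. lra. Qed.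
Lemma Ssum_ext : forall T (h g : T -> R) l, (forall a, In a l -> h a = g a) -> Ssum h l = Ssum g l.
Proof. induction l; intros; [reflexivity|]. rewrite !Ssum_cons. rewrite H by (left; auto). rewrite IHl; auto. intros; apply H; right; auto. Qed.
Lemma Ssum_plus : forall T (h g : T -> R) l, Ssum (fun a => h a + g a) l = Ssum h l + Ssum g l.
Proof. induction l; [unfold Ssum; simpl; lra|]. rewrite !Ssum_cons, IHl. lra. Qed.
Lemma Ssum_scal : forall T (h : T -> R) k l, Ssum (fun a => k * h a) l = k * Ssum h l.
Proof. induction l; [unfold Ssum; simpl; lra|]. rewrite !Ssum_cons, IHl. lra. Qed.
Lemma Ssum_map : forall T U (h : U -> R) (g : T -> U) l, Ssum h (map g l) = Ssum (fun a => h (g a)) l.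
Proof. intros. unfold Ssum. rewrite map_map. reflexivity. Qed.
Lemma Ssum_le : forall T (h g : T -> R) l, (forall a, In a l -> h a <= g a) -> Ssum h l <= Ssum g l.
Proof. induction l; intros; [unfold Ssum; simpl; lra|]. rewrite !Ssum_cons. pose proof (H a (or_introl eq_refl)).
  assert (Ssum h l <= Ssum g l) by (apply IHl; intros; apply H; right; auto). lra. Qed.
Lemma Ssum_zero : forall T (h : T -> R) l, (forall a, In a l -> h a = 0) -> Ssum h l = 0.
Proof. intros. transitivity (Ssum (fun _ => 0) l). apply Ssum_ext; auto. induction l; [reflexivity|]. rewrite Ssum_cons, IHl; [lra|]. intros; apply H; right; auto. Qed.

Lemma sumw_eq : forall n (l : list (R * vec n)), fold_right Rplus 0 (map fst l) = Ssum fst l.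
Proof. reflexivity. Qed.

Lemma lcomb_coord : forall n (l : list (R * vec n)) j, lcomb l j = Ssum (fun ap => fst ap * snd ap j) l.
Proof. induction l as [|[a p] l IH]; intros; simpl. reflexivity. rewrite Ssum_cons. unfold vadd, vscal. rewrite IH. reflexivity. Qed.

Lemma dot_lcomb : forall n (g : vec n) (l : list (R * vec n)), dot g (lcomb l) = Ssum (fun ap => fst ap * dot g (snd ap)) l.
Proof. induction l as [|[a p] l IH]; simpl. apply dot_zero_r. rewrite Ssum_cons, dot_add_r, dot_scal_r, IH. reflexivity. Qed.

Lemma fin_S_ind : forall N (P : Fin.t (S N) -> Prop), P Fin.F1 -> (forall j, P (Fin.FS j)) -> forall i, P i.
Proof. intros N P H1 H2 i. refine (Fin.caseS' i _ _ _); auto. Qed.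

Definition ldep {T} N (f : T -> vec N) (l : list T) : Prop :=
  exists cl : list (R * T), map snd cl = l /\
    (forall i, Ssum (fun ct => fst ct * f (snd ct) i) cl = 0) /\ Exists (fun ct => fst ct <> 0) cl.

Lemma in_map_snd : forall T (cl : list (R * T)) ct, In ct cl -> In (snd ct) (map snd cl).
Proof. intros. apply in_map. auto. Qed.

Lemma lin_dep : forall N T (f : T -> vec N) (l : list T), (length l > N)%nat -> ldep N f l.
Proof. induction N; intros T f l Hl.
  - destruct l as [|t l]; [simpl in Hl; lia|]. exists ((1, t) :: map (fun t => (0, t)) l). split.
    simpl. rewrite map_map. simpl. rewrite map_id. reflexivity. split. intro i. exact (Fin.case0 (fun i => Ssum (fun ct : R * T => fst ct * f (snd ct) i) ((1, t) :: map (fun t : T => (0, t)) l) = 0) i).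
    constructor. simpl. lra.
  - destruct (classic (exists p, In p l /\ f p Fin.F1 <> 0)) as [[p [Hp Hc]]|Hno].
    + destruct (in_split _ _ Hp) as [a [b Hab]]. set (c0 := f p Fin.F1) in *.
      set (g := fun t => vtail (vsub (f t) (vscal (f t Fin.F1 / c0) (f p)))).
      destruct (IHN T g (a ++ b)) as [cl [Hcl1 [Hcl2 Hcl3]]].
      { rewrite Hab in Hl. rewrite length_app in *. simpl in Hl. lia. }
      destruct (map_eq_app _ _ _ _ Hcl1) as [ca [cb [Hcc [Ha Hb]]]].
      set (cp := - Ssum (fun ct => fst ct * f (snd ct) Fin.F1) cl / c0).
      exists (ca ++ (cp, p) :: cb). split. rewrite map_app. simpl. rewrite Ha, Hb. auto.
      split.
      * assert (E : forall i, Ssum (fun ct => fst ct * f (snd ct) i) (ca ++ (cp, p) :: cb)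
            = Ssum (fun ct => fst ct * f (snd ct) i) cl + cp * f p i).
        { intro i. rewrite Hcc, !Ssum_app, Ssum_cons. simpl. lra. }
        apply fin_S_ind.
        -- rewrite E. unfold cp. fold c0. field. auto.
        -- intro j. rewrite E. specialize (Hcl2 j). unfold g, vtail, vsub, vscal in Hcl2.
           assert (Ssum (fun ct => fst ct * (f (snd ct) (Fin.FS j) - f (snd ct) Fin.F1 / c0 * f p (Fin.FS j))) cl
             = Ssum (fun ct => fst ct * f (snd ct) (Fin.FS j)) cl + (- (f p (Fin.FS j) / c0)) * Ssum (fun ct => fst ct * f (snd ct) Fin.F1) cl).
           { rewrite <- Ssum_scal. rewrite <- Ssum_plus. apply Ssum_ext. intros. field. auto. }
           rewrite Hcl2 in H. unfold cp. replace (- Ssum (fun ct : R * T => fst ct * f (snd ct) Fin.F1) cl / c0 * f p (Fin.FS j))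
             with (- (f p (Fin.FS j) / c0) * Ssum (fun ct : R * T => fst ct * f (snd ct) Fin.F1) cl) by (field; auto). lra.
      * rewrite Hcc in Hcl3. apply Exists_app in Hcl3. apply Exists_app. destruct Hcl3; [left|right]; auto.
    + destruct (IHN T (fun t => vtail (f t)) l) as [cl [Hcl1 [Hcl2 Hcl3]]]. lia.
      exists cl. split; auto. split; auto. apply fin_S_ind.
      * apply Ssum_zero. intros ct Hct. assert (f (snd ct) Fin.F1 = 0).
        { apply NNPP. intro. apply Hno. exists (snd ct). split; auto. rewrite <- Hcl1. apply in_map_snd; auto. }
        rewrite H. ring.
      * intro j. apply (Hcl2 j).
Qed.


Lemma nonpos_sum : forall T (c : T -> R) l, Forall (fun e => c e <= 0) l -> Ssum c l <= 0.
Proof. intros T c l HF. induction HF. unfold Ssum; simpl; lra. rewrite Ssum_cons. lra. Qed.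

Lemma neg_sum : forall T (c : T -> R) l, Forall (fun e => c e <= 0) l -> Exists (fun e => c e <> 0) l -> Ssum c l < 0.
Proof. intros T c l HF HE. induction HE.
  - rewrite Ssum_cons. apply Forall_inv_tail in HF as HF'. apply Forall_inv in HF. pose proof (nonpos_sum T c l HF'). lra.
  - rewrite Ssum_cons. apply Forall_inv_tail in HF as HF'. apply Forall_inv in HF. specialize (IHHE HF'). lra. Qed.

Lemma pos_exists : forall T (c : T -> R) l, Ssum c l = 0 -> Exists (fun e => c e <> 0) l -> Exists (fun e => c e > 0) l.
Proof. intros. apply NNPP. intro HN. assert (Forall (fun e => c e <= 0) l).
  { apply Forall_forall. intros x Hx. destruct (Rle_lt_dec (c x) 0); auto. exfalso. apply HN. apply Exists_exists. exists x; auto. }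
  pose proof (neg_sum T c l H1 H0). lra. Qed.

Lemma min_ratio : forall T (c r : T -> R) l, Exists (fun e => c e > 0) l ->
  exists e, In e l /\ c e > 0 /\ forall e', In e' l -> c e' > 0 -> r e <= r e'.
Proof. intros T c r l H. induction l as [|a l IH]. inversion H.
  destruct (classic (Exists (fun e => c e > 0) l)) as [Hl|Hl].
  - destruct (IH Hl) as [e [He1 [He2 He3]]]. destruct (Rle_lt_dec (r e) (r a)).
    + exists e. split. right; auto. split; auto. intros e' [<-|He'] Hc; auto.
    + destruct (Rlt_le_dec 0 (c a)).
      * exists a. split. left; auto. split; auto. intros e' [<-|He'] Hc. lra. specialize (He3 e' He' Hc). lra.
      * exists e. split. right; auto. split; auto. intros e' [<-|He'] Hc; [lra|auto].
  - inversion H; subst; [|contradiction]. exists a. split. left; auto. split; auto.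
    intros e' [<-|He'] Hc. lra. exfalso. apply Hl. apply Exists_exists. eauto. Qed.

Definition cvalid {n} (X : vec n -> Prop) (l : list (R * vec n)) :=
  Forall (fun ap => 0 <= fst ap /\ X (snd ap)) l /\ Ssum fst l = 1.

Lemma carath_step : forall n X (l : list (R * vec n)), cvalid X l -> (length l > S n)%nat ->
  exists l', cvalid X l' /\ length l' = pred (length l) /\ lcomb l' = lcomb l.
Proof. intros n X l [HF HS] Hlen.
  destruct (lin_dep (S n) (R * vec n) (fun ap => vcons 1 (snd ap)) l Hlen) as [cl [Hm [Hs Hex]]].
  assert (Hs1 : Ssum fst cl = 0). { rewrite <- (Hs Fin.F1). apply Ssum_ext. intros. simpl. ring. }
  assert (HsF : forall j, Ssum (fun ct => fst ct * snd (snd ct) j) cl = 0). { intro j. rewrite <- (Hs (Fin.FS j)). reflexivity. }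
  pose proof (pos_exists _ fst cl Hs1 Hex) as Hpos.
  destruct (min_ratio _ fst (fun e => fst (snd e) / fst e) cl Hpos) as [es [Hes1 [Hes2 Hes3]]].
  set (t := fst (snd es) / fst es).
  assert (Hlam : forall e, In e cl -> 0 <= fst (snd e) /\ X (snd (snd e))).
  { intros e He. rewrite Forall_forall in HF. apply HF. rewrite <- Hm. apply in_map. auto. }
  assert (Ht : 0 <= t). { unfold t. destruct (Hlam es Hes1). unfold Rdiv. apply Rmult_le_pos; [lra|]. left; apply Rinv_0_lt_compat; lra. }
  set (h := fun e : R * (R * vec n) => (fst (snd e) - t * fst e, snd (snd e))).
  assert (Hh : forall e, In e cl -> 0 <= fst (h e)).
  { intros e He. simpl. destruct (Hlam e He). destruct (Rlt_le_dec 0 (fst e)).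
    - specialize (Hes3 e He r). fold t in Hes3. apply Rmult_le_compat_r with (r := fst e) in Hes3; [|lra].
      unfold Rdiv in Hes3. rewrite Rmult_assoc, Rinv_l in Hes3 by lra. lra.
    - nra. }
  assert (Hh0 : fst (h es) = 0). { simpl. unfold t. field. lra. }
  destruct (in_split _ _ Hes1) as [ca [cb Hcl]].
  exists (map h (ca ++ cb)). split; [split|split].
  - apply Forall_forall. intros x Hx. apply in_map_iff in Hx. destruct Hx as [e [<- He]].
    assert (In e cl) by (rewrite Hcl; apply in_app_or in He; apply in_or_app; destruct He; [left|right; right]; auto).
    split. apply Hh; auto. simpl. apply Hlam; auto.
  - rewrite Ssum_map. 
    assert (Ssum (fun e => fst (h e)) cl = 1).
    { transitivity (Ssum (fun e => fst (snd e)) cl + (- t) * Ssum fst cl).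
      rewrite <- Ssum_scal, <- Ssum_plus. apply Ssum_ext. intros. simpl. ring.
      rewrite Hs1. rewrite <- HS. rewrite <- Hm. rewrite Ssum_map. ring. }
    rewrite Hcl in H. rewrite Ssum_app, Ssum_cons, Hh0 in H. rewrite Ssum_app. lra.
  - rewrite length_map, length_app. rewrite <- Hm, length_map, Hcl, length_app. simpl. lia.
  - apply vec_ext. intro j. rewrite !lcomb_coord. rewrite Ssum_map.
    assert (Ssum (fun e => fst (h e) * snd (h e) j) cl = Ssum (fun ap => fst ap * snd ap j) l).
    { transitivity (Ssum (fun e => fst (snd e) * snd (snd e) j) cl + (- t) * Ssum (fun ct => fst ct * snd (snd ct) j) cl).
      rewrite <- Ssum_scal, <- Ssum_plus. apply Ssum_ext. intros. simpl. unfold vec in *. ring.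
      rewrite HsF. rewrite <- Hm. rewrite Ssum_map. unfold vec in *. ring. }
    rewrite Hcl in H. rewrite Ssum_app, Ssum_cons, Hh0 in H. rewrite Ssum_app. unfold vec in *. lra.
Qed.

Lemma carath : forall n X (x : vec n), conv X x ->
  exists l, cvalid X l /\ (length l <= S n)%nat /\ x = lcomb l.
Proof. intros n X x [l [HF [HS Hx]]].
  assert (forall m l, length l = m -> cvalid X l -> exists l', cvalid X l' /\ (length l' <= S n)%nat /\ lcomb l = lcomb l').
  { induction m; intros l0 Hl0 Hv.
    - exists l0. split; auto. split; [lia|auto].
    - destruct (Nat.le_gt_cases (S m) (S n)).
      + exists l0. split; auto. split; [lia|auto].
      + destruct (carath_step n X l0 Hv) as [l' [Hv' [Hl' Hc']]]. lia.
        destruct (IHm l' ltac:(lia) Hv') as [l'' [H1 [H2 H3]]]. exists l''. split; auto. split; auto. congruence. }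
  destruct (H (length l) l eq_refl) as [l' [H1 [H2 H3]]]. split; auto.
  exists l'. split; auto. split; auto. congruence. Qed.

Lemma lcomb_app : forall n (l1 l2 : list (R * vec n)), lcomb (l1 ++ l2) = vadd (lcomb l1) (lcomb l2).
Proof. intros. apply vec_ext. intro j. unfold vadd. rewrite !lcomb_coord. apply Ssum_app. Qed.

Lemma carath_exact : forall n X (x : vec n), nonempty X -> conv X x ->
  exists l, cvalid X l /\ length l = S n /\ x = lcomb l.
Proof. intros n X x [p0 Hp0] Hx. destruct (carath n X x Hx) as [l [[HF HS] [Hl Hxl]]].
  exists (l ++ repeat (0, p0) (S n - length l)). split; [split|split].
  - apply Forall_app. split; auto. apply Forall_forall. intros y Hy. apply repeat_spec in Hy. subst. simpl. split; [lra|auto].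
  - rewrite Ssum_app, HS. rewrite Ssum_zero. ring. intros a Ha. apply repeat_spec in Ha. subst. reflexivity.
  - rewrite length_app, repeat_length. lia.
  - rewrite lcomb_app. apply vec_ext. intro j. rewrite Hxl. unfold vadd. rewrite (lcomb_coord _ (repeat _ _)).
    rewrite Ssum_zero. ring. intros a Ha. apply repeat_spec in Ha. subst. simpl. ring. Qed.


Lemma vconv_const : forall n (l : vec n), vconv (fun _ => l) l.
Proof. intros n l eps H. exists O. intros. rewrite norm_self_sub. lra. Qed.

Lemma rconv_const : forall l, rconv (fun _ => l) l.
Proof. intros l eps H. exists O. intros. replace (l - l) with 0 by ring. rewrite Rabs_R0. lra. Qed.

Lemma rconv_plus : forall u v a b, rconv u a -> rconv v b -> rconv (fun k => u k + v k) (a + b).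
Proof. intros u v a b Hu Hv eps He. destruct (Hu (eps/2)) as [N1 H1]. lra. destruct (Hv (eps/2)) as [N2 H2]. lra.
  exists (max N1 N2). intros k Hk. specialize (H1 k ltac:(lia)). specialize (H2 k ltac:(lia)).
  replace (u k + v k - (a + b)) with ((u k - a) + (v k - b)) by ring. eapply Rle_lt_trans. apply Rabs_triang. lra. Qed.

Lemma vconv_add : forall n (u v : nat -> vec n) a b, vconv u a -> vconv v b -> vconv (fun k => vadd (u k) (v k)) (vadd a b).
Proof. intros n u v a b Hu Hv eps He. destruct (Hu (eps/2)) as [N1 H1]. lra. destruct (Hv (eps/2)) as [N2 H2]. lra.
  exists (max N1 N2). intros k Hk. specialize (H1 k ltac:(lia)). specialize (H2 k ltac:(lia)).
  replace (vsub (vadd (u k) (v k)) (vadd a b)) with (vadd (vsub (u k) a) (vsub (v k) b)).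
  eapply Rle_lt_trans. apply norm_triangle. lra. apply vec_ext. intros; unfold vadd, vsub; ring. Qed.

Lemma vconv_scal_bdd : forall n (a : nat -> R) (p : nat -> vec n) al P B,
  (forall k, Rabs (a k) <= B) -> rconv a al -> vconv p P -> vconv (fun k => vscal (a k) (p k)) (vscal al P).
Proof. intros n a p al P B HB Ha Hp eps He.
  assert (HB0 : 0 <= B) by (specialize (HB O); pose proof (Rabs_pos (a O)); lra).
  pose proof (norm_nonneg _ P).
  destruct (Ha (eps / (2 * (norm P + 1)))) as [N1 H1]. apply Rdiv_lt_0_compat; lra.
  destruct (Hp (eps / (2 * (B + 1)))) as [N2 H2]. apply Rdiv_lt_0_compat; lra.
  exists (max N1 N2). intros k Hk. specialize (H1 k ltac:(lia)). specialize (H2 k ltac:(lia)).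
  replace (vsub (vscal (a k) (p k)) (vscal al P)) with (vadd (vscal (a k) (vsub (p k) P)) (vscal (a k - al) P)).
  2:{ apply vec_ext; intros; unfold vadd, vsub, vscal; ring. }
  eapply Rle_lt_trans. apply norm_triangle. rewrite !norm_scal.
  specialize (HB k). pose proof (norm_nonneg _ (vsub (p k) P)). pose proof (Rabs_pos (a k - al)). pose proof (Rabs_pos (a k)).
  assert (Rabs (a k) * norm (vsub (p k) P) <= B * (eps / (2 * (B + 1)))) by (apply Rmult_le_compat; lra).
  assert (Rabs (a k - al) * norm P <= (eps / (2 * (norm P + 1))) * norm P) by (apply Rmult_le_compat_r; lra).
  assert (B * (eps / (2 * (B + 1))) < eps/2). { unfold Rdiv. rewrite Rinv_mult. 
    assert (B * / (B+1) < 1). { apply Rmult_lt_reg_r with (B+1). lra. rewrite Rmult_assoc, Rinv_l by lra. lra. }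
    assert (0 < /2) by lra. nra. }
  assert ((eps / (2 * (norm P + 1))) * norm P < eps/2). { unfold Rdiv. rewrite Rinv_mult.
    assert (norm P * / (norm P+1) < 1). { apply Rmult_lt_reg_r with (norm P+1). lra. rewrite Rmult_assoc, Rinv_l by lra. lra. }
    assert (0 < /2) by lra. nra. }
  lra. Qed.

Lemma term_le_Ssum : forall T (c : T -> R) l a, Forall (fun e => 0 <= c e) l -> In a l -> c a <= Ssum c l.
Proof. intros T c l a HF Ha. induction l. destruct Ha. rewrite Ssum_cons. apply Forall_inv_tail in HF as HF'. apply Forall_inv in HF.
  destruct Ha as [<-|Ha]. pose proof (nonpos_sum T (fun e => - c e) l). 
  assert (Ssum (fun e => - c e) l = - Ssum c l). { replace (- Ssum c l) with (-1 * Ssum c l) by ring. rewrite <- (Ssum_scal T c (-1)). apply Ssum_ext. intros; ring. }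
  assert (Forall (fun e => - c e <= 0) l). { apply Forall_forall. intros. rewrite Forall_forall in HF'. specialize (HF' x H1). lra. }
  specialize (H H1). lra. specialize (IHl HF' Ha). lra. Qed.

Lemma compact_bounded : forall n (S : vec n -> Prop), is_compact S -> exists M, forall u, S u -> norm u <= M.
Proof. intros n S HS. apply NNPP. intro HN.
  assert (H : forall k : nat, exists u, S u /\ norm u > INR k).
  { intro k. apply NNPP. intro H. apply HN. exists (INR k). intros u Hu. destruct (Rle_lt_dec (norm u) (INR k)); auto.
    exfalso. apply H. exists u. split; auto. }
  assert (sel : forall k : nat, {u | S u /\ norm u > INR k}) by (intro k; apply constructive_indefinite_description; auto).
  destruct (HS (fun k => proj1_sig (sel k))) as [phi [l [Hphi [Hl Hc]]]]. intro k; exact (proj1 (proj2_sig (sel k))).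
  destruct (Hc 1) as [N HN1]. lra. destruct (INR_unbounded (norm l + 1)) as [K HK].
  specialize (HN1 (max N K) ltac:(lia)). pose proof (proj2 (proj2_sig (sel (phi (max N K))))) as A1.
  simpl in HN1. pose proof (norm_sub_triangle _ (proj1_sig (sel (phi (max N K)))) l vzero) as A2.
  assert (A3 : forall v : vec n, vsub v vzero = v) by (intros; apply vec_ext; intros; unfold vsub, vzero; ring).
  rewrite !A3 in A2. pose proof (si_ge _ Hphi (max N K)) as A4. apply le_INR in A4. pose proof (le_INR K (max N K) ltac:(lia)).
  lra. Qed.

Lemma compact_closed : forall n (S : vec n -> Prop), is_compact S -> is_closed S.
Proof. intros n S HS u l Hu Hc. destruct (HS u Hu) as [phi [l' [Hphi [Hl' Hc']]]].
  assert (l = l') by (apply (vconv_unique _ (fun k => u (phi k))); auto; apply vconv_sub; auto). subst; auto. Qed.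

Lemma rconv_ext : forall u v l, (forall k, u k = v k) -> rconv u l -> rconv v l.
Proof. intros u v l He H eps Heps. destruct (H eps Heps) as [N HN]. exists N. intros. rewrite <- He. auto. Qed.

Lemma vconv_ext : forall n (u v : nat -> vec n) l, (forall k, u k = v k) -> vconv u l -> vconv v l.
Proof. intros n u v l He H eps Heps. destruct (H eps Heps) as [N HN]. exists N. intros. rewrite <- He. auto. Qed.

Lemma lcomb_cons : forall n (a : R * vec n) l, lcomb (a :: l) = vadd (vscal (fst a) (snd a)) (lcomb l).
Proof. intros n [x p] l. reflexivity. Qed.

Lemma extract_lists : forall n (X : vec n -> Prop), is_compact X -> forall m (s : nat -> list (R * vec n)),
  (forall k, length (s k) = m /\ Forall (fun ap => 0 <= fst ap <= 1 /\ X (snd ap)) (s k)) ->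
  exists phi L, strictly_increasing phi /\ Forall (fun ap => 0 <= fst ap <= 1 /\ X (snd ap)) L /\
   rconv (fun k => Ssum fst (s (phi k))) (Ssum fst L) /\ vconv (fun k => lcomb (s (phi k))) (lcomb L).
Proof. intros n X HX. induction m; intros s Hs.
  - exists (fun k => k), nil. split. intro; lia. split. constructor.
    assert (forall k, s k = nil) by (intro k; destruct (Hs k) as [H _]; destruct (s k); [auto|simpl in H; lia]).
    split. apply rconv_ext with (fun _ => Ssum fst (@nil (R * vec n))). intro k; rewrite H; auto. apply rconv_const.
    apply vconv_ext with (fun _ => lcomb (@nil (R * vec n))). intro k; rewrite H; auto. apply vconv_const.
  - set (a := fun k => hd (0, vzero) (s k)). set (t := fun k => tl (s k)).
    assert (Hst : forall k, s k = a k :: t k).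
    { intro k. destruct (Hs k) as [H _]. unfold a, t. destruct (s k); [simpl in H; lia|reflexivity]. }
    assert (Hat : forall k, (0 <= fst (a k) <= 1 /\ X (snd (a k))) /\ length (t k) = m /\ Forall (fun ap => 0 <= fst ap <= 1 /\ X (snd ap)) (t k)).
    { intro k. destruct (Hs k) as [H1 H2]. rewrite Hst in H1, H2. simpl in H1. split. apply Forall_inv in H2; auto.
      split. lia. apply Forall_inv_tail in H2. auto. }
    destruct (IHm t) as [phi1 [L1 [Hp1 [HF1 [Hr1 Hv1]]]]]. intro k; apply Hat.
    destruct (BW1 (fun k => fst (a (phi1 k))) 1) as [phi2 [lam [Hp2 Hr2]]].
    { intro k. destruct (Hat (phi1 k)) as [[H _] _]. rewrite Rabs_right; lra. }
    destruct (HX (fun k => snd (a (phi1 (phi2 k))))) as [phi3 [p [Hp3 [Hp Hv3]]]]. intro k; apply Hat.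
    exists (fun k => phi1 (phi2 (phi3 k))), ((lam, p) :: L1). split. apply si_comp; auto. apply si_comp; auto.
    assert (Hlam : 0 <= lam <= 1). { split.
      apply (rconv_le (fun _ => 0) (fun k => fst (a (phi1 (phi2 k))))); auto. apply rconv_const. intro k; apply Hat.
      apply (rconv_le (fun k => fst (a (phi1 (phi2 k)))) (fun _ => 1)); auto. apply rconv_const. intro k; apply Hat. }
    split. constructor; auto.
    split.
    + apply rconv_ext with (fun k => fst (a (phi1 (phi2 (phi3 k)))) + Ssum fst (t (phi1 (phi2 (phi3 k))))).
      intro k. rewrite Hst. reflexivity.
      rewrite Ssum_cons. apply rconv_plus. apply (rconv_sub _ _ _ Hp3 Hr2).
      apply (rconv_sub (fun k => Ssum fst (t (phi1 k))) _ (fun k => phi2 (phi3 k))). apply si_comp; auto. auto.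
    + apply vconv_ext with (fun k => vadd (vscal (fst (a (phi1 (phi2 (phi3 k))))) (snd (a (phi1 (phi2 (phi3 k)))))) (lcomb (t (phi1 (phi2 (phi3 k)))))).
      intro k. rewrite Hst. rewrite lcomb_cons. reflexivity.
      rewrite lcomb_cons. apply vconv_add. apply vconv_scal_bdd with 1.
      intro k. destruct (Hat (phi1 (phi2 (phi3 k)))) as [[H _] _]. rewrite Rabs_right; lra.
      apply (rconv_sub _ _ _ Hp3 Hr2). auto.
      apply (vconv_sub _ (fun k => lcomb (t (phi1 k))) _ (fun k => phi2 (phi3 k))). apply si_comp; auto. auto.
Qed.

Lemma conv_compact : forall n (X : vec n -> Prop), nonempty X -> is_compact X -> is_compact (conv X).
Proof. intros n X Hne HX u Hu.
  assert (sel : forall k, {l | cvalid X l /\ length l = S n /\ u k = lcomb l}).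
  { intro k. apply constructive_indefinite_description. apply carath_exact; auto. }
  set (s := fun k => proj1_sig (sel k)).
  assert (Hs : forall k, cvalid X (s k) /\ length (s k) = S n /\ u k = lcomb (s k)) by (intro k; exact (proj2_sig (sel k))).
  destruct (extract_lists n X HX (S n) s) as [phi [L [Hphi [HF [Hr Hv]]]]].
  { intro k. destruct (Hs k) as [[HF HS] [Hl _]]. split; auto. apply Forall_forall. intros x Hx.
    rewrite Forall_forall in HF. destruct (HF x Hx). split; auto. split; auto. rewrite <- HS.
    apply term_le_Ssum; auto. apply Forall_forall. intros y Hy. apply HF; auto. }
  exists phi, (lcomb L). split; auto. split.
  - exists L. split. apply Forall_forall. intros x Hx. rewrite Forall_forall in HF. destruct (HF x Hx). split; [lra|auto].
    split; auto. rewrite sumw_eq. apply (rconv_unique (fun k => Ssum fst (s (phi k)))); auto.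
    apply rconv_ext with (fun _ => 1). intro k. destruct (Hs (phi k)) as [[_ HS] _]. auto. apply rconv_const.
  - apply vconv_ext with (fun k => lcomb (s (phi k))); auto. intro k. destruct (Hs (phi k)) as [_ [_ H]]. auto.
Qed.


Lemma pnorm_eq : forall n q (x : vec n) (z : vec q), sqrt (Rsqr (norm x) + Rsqr (norm z)) = pnorm x z.
Proof. reflexivity. Qed.

Lemma grad_cont : forall n q (F : vec n -> vec q -> R) x z gx gz, has_gradient F x z gx gz ->
  forall eps, eps > 0 -> exists delta, delta > 0 /\ forall x' z', norm (vsub x' x) + norm (vsub z' z) < delta ->
    Rabs (F x' z' - F x z) < eps.
Proof. intros n q F x z gx gz Hg eps He. destruct (Hg 1 ltac:(lra)) as [d [Hd Hd2]].
  set (K := norm gx + norm gz + 1). assert (HK : K > 0) by (unfold K; pose proof (norm_nonneg _ gx); pose proof (norm_nonneg _ gz); lra).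
  exists (Rmin d (eps / K)). split. apply Rmin_pos; auto. apply Rdiv_lt_0_compat; lra.
  intros x' z' Hxz. pose proof (pnorm_le _ _ (vsub x' x) (vsub z' z)) as Hp.
  assert (Hr : pnorm (vsub x' x) (vsub z' z) < d) by (pose proof (Rmin_l d (eps/K)); lra).
  specialize (Hd2 x' z' Hr). rewrite pnorm_eq in Hd2.
  pose proof (cauchy_schwarz _ gx (vsub x' x)). pose proof (cauchy_schwarz _ gz (vsub z' z)).
  pose proof (norm_nonneg _ gx). pose proof (norm_nonneg _ gz). pose proof (norm_nonneg _ (vsub x' x)). pose proof (norm_nonneg _ (vsub z' z)).
  set (s := norm (vsub x' x) + norm (vsub z' z)) in *.
  assert (Rabs (F x' z' - F x z) <= K * s).
  { replace (F x' z' - F x z) with ((F x' z' - F x z - dot gx (vsub x' x) - dot gz (vsub z' z)) + dot gx (vsub x' x) + dot gz (vsub z' z)) by ring.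
    eapply Rle_trans. apply Rabs_triang. eapply Rle_trans. apply Rplus_le_compat_r. apply Rabs_triang.
    assert (norm gx * norm (vsub x' x) <= norm gx * s) by (apply Rmult_le_compat_l; unfold s; lra).
    assert (norm gz * norm (vsub z' z) <= norm gz * s) by (apply Rmult_le_compat_l; unfold s; lra).
    assert (1 * sqrt ((norm (vsub x' x))² + (norm (vsub z' z))²) <= s) by (rewrite pnorm_eq; lra).
    unfold K. lra. }
  assert (Hs : s < eps / K) by (pose proof (Rmin_r d (eps/K)); lra).
  assert (K * s < eps). { apply Rmult_lt_compat_l with (r := K) in Hs; auto. unfold Rdiv in Hs. rewrite <- Rmult_assoc, (Rmult_comm K eps), Rmult_assoc, Rinv_r in Hs by lra. lra. }
  lra. Qed.

Lemma F_seq_cont : forall n q (F : vec n -> vec q -> R) x z gx gz, has_gradient F x z gx gz ->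
  forall (xs : nat -> vec n) (zs : nat -> vec q), vconv xs x -> vconv zs z -> rconv (fun k => F (xs k) (zs k)) (F x z).
Proof. intros n q F x z gx gz Hg xs zs Hx Hz eps He. destruct (grad_cont _ _ F x z gx gz Hg eps He) as [d [Hd Hd2]].
  destruct (Hx (d/2)) as [N1 H1]. lra. destruct (Hz (d/2)) as [N2 H2]. lra. exists (max N1 N2). intros k Hk.
  apply Hd2. specialize (H1 k ltac:(lia)). specialize (H2 k ltac:(lia)). lra. Qed.

Lemma G_seq_cont : forall n q m (G : vec n -> vec q -> vec m), continuous2 G -> forall x z
  (xs : nat -> vec n) (zs : nat -> vec q), vconv xs x -> vconv zs z -> vconv (fun k => G (xs k) (zs k)) (G x z).
Proof. intros n q m G HG x z xs zs Hx Hz eps He. destruct (HG x z eps He) as [d [Hd Hd2]].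
  destruct (Hx (d/2)) as [N1 H1]. lra. destruct (Hz (d/2)) as [N2 H2]. lra. exists (max N1 N2). intros k Hk.
  apply Hd2. specialize (H1 k ltac:(lia)). specialize (H2 k ltac:(lia)).
  pose proof (pnorm_le _ _ (vsub (xs k) x) (vsub (zs k) z)). unfold pnorm in H. lra. Qed.

Lemma pnorm_scal : forall n q a (u : vec n) (v : vec q), pnorm (vscal a u) (vscal a v) = Rabs a * pnorm u v.
Proof. intros. unfold pnorm. rewrite !norm_scal. rewrite !Rsqr_mult. rewrite <- Rmult_plus_distr_l.
  rewrite sqrt_mult_alt by apply Rle_0_sqr. rewrite sqrt_Rsqr_abs, Rabs_Rabsolu. reflexivity. Qed.

Lemma dir_deriv : forall n q (F : vec n -> vec q -> R) x z gx gz, has_gradient F x z gx gz ->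
  forall dx dz eps, eps > 0 -> exists a0, a0 > 0 /\ forall a, 0 < a <= a0 ->
    Rabs (F (vadd x (vscal a dx)) (vadd z (vscal a dz)) - F x z - a * (dot gx dx + dot gz dz)) <= eps * a.
Proof. intros n q F x z gx gz Hg dx dz eps He. set (r0 := pnorm dx dz). pose proof (pnorm_nonneg _ _ dx dz) as Hr0. fold r0 in Hr0.
  destruct (Hg (eps / (r0 + 1))) as [d [Hd Hd2]]. apply Rdiv_lt_0_compat; lra.
  exists (d / (r0 + 1)). split. apply Rdiv_lt_0_compat; lra. intros a Ha.
  assert (E1 : vsub (vadd x (vscal a dx)) x = vscal a dx) by (apply vec_ext; intros; unfold vsub, vadd, vscal; ring).
  assert (E2 : vsub (vadd z (vscal a dz)) z = vscal a dz) by (apply vec_ext; intros; unfold vsub, vadd, vscal; ring).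
  assert (Hpa : pnorm (vscal a dx) (vscal a dz) = a * r0) by (rewrite pnorm_scal, Rabs_right by lra; reflexivity).
  assert (a * r0 < d). { assert (a * (r0+1) <= d). { destruct Ha as [_ Ha]. apply Rmult_le_compat_r with (r := r0+1) in Ha. 2: lra.
      unfold Rdiv in Ha. rewrite Rmult_assoc, Rinv_l in Ha by lra. lra. } lra. }
  specialize (Hd2 (vadd x (vscal a dx)) (vadd z (vscal a dz))). rewrite E1, E2, !pnorm_eq, Hpa in Hd2.
  specialize (Hd2 H). rewrite !dot_scal_r in Hd2.
  replace (F (vadd x (vscal a dx)) (vadd z (vscal a dz)) - F x z - a * (dot gx dx + dot gz dz)) with
    (F (vadd x (vscal a dx)) (vadd z (vscal a dz)) - F x z - a * dot gx dx - a * dot gz dz) by ring.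
  eapply Rle_trans. apply Hd2. 
  assert (eps / (r0 + 1) * r0 <= eps). { unfold Rdiv. rewrite Rmult_assoc. 
    assert (/ (r0+1) * r0 <= 1). { apply Rmult_le_reg_l with (r0+1). lra. rewrite <- Rmult_assoc, Rinv_r by lra. lra. }
    nra. }
  nra. Qed.


Lemma norm_cont : forall n (u : nat -> vec n) l, vconv u l -> rconv (fun k => norm (u k)) (norm l).
Proof. intros n u l H eps He. destruct (H eps He) as [N HN]. exists N. intros k Hk. specialize (HN k Hk).
  pose proof (norm_sub_triangle _ (u k) l vzero). pose proof (norm_sub_triangle _ l (u k) vzero).
  assert (A : forall v : vec n, vsub v vzero = v) by (intros; apply vec_ext; intros; unfold vsub, vzero; ring).
  rewrite !A in H0, H1. rewrite norm_opp_sub in H1. apply Rabs_def1; lra. Qed.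

Lemma z_bounded : forall n q (F : vec n -> vec q -> R) Gx Gz (Z : vec q -> Prop) x0 z0
  (xs : nat -> vec n) (zs : nat -> vec q) Mx c,
  (forall x z, has_gradient F x z (Gx x z) (Gz x z)) -> jointly_convex F -> is_closed Z -> is_convex Z ->
  inf_compact Z (fun zz => F x0 zz) -> Z z0 -> F x0 z0 <= c ->
  (forall k, norm (vsub (xs k) x0) <= Mx) -> (forall k, Z (zs k)) -> (forall k, F (xs k) (zs k) <= c) ->
  exists M, forall k, norm (vsub (zs k) z0) <= M.
Proof. intros n q F Gx Gz Z x0 z0 xs zs Mx c Hg Hcv HZcl HZcv Hinf Hz0 Hc0 HMx HZs Hcs.
  assert (HMx0 : 0 <= Mx) by (specialize (HMx O); pose proof (norm_nonneg _ (vsub (xs O) x0)); lra).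
  apply NNPP. intro HN.
  assert (Hk : forall m : nat, exists k, norm (vsub (zs k) z0) > INR m + 1).
  { intro m. apply NNPP. intro H. apply HN. exists (INR m + 1). intro k. destruct (Rle_lt_dec (norm (vsub (zs k) z0)) (INR m + 1)); auto.
    exfalso. apply H. exists k. lra. }
  assert (sel : forall m : nat, {k | norm (vsub (zs k) z0) > INR m + 1}) by (intro m; apply constructive_indefinite_description; auto).
  set (km := fun m => proj1_sig (sel m)).
  assert (Hkm : forall m, norm (vsub (zs (km m)) z0) > INR m + 1) by (intro m; exact (proj2_sig (sel m))).
  set (rho := fun m => norm (vsub (zs (km m)) z0)).
  assert (Hrho : forall m, rho m > INR m + 1) by exact Hkm.
  assert (Hrho1 : forall m, rho m > 0) by (intro m; specialize (Hrho m); pose proof (pos_INR m); lra).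
  set (d := fun m => vscal (/ rho m) (vsub (zs (km m)) z0)).
  assert (Hd1 : forall m, norm (d m) = 1).
  { intro m. unfold d. rewrite norm_scal. rewrite Rabs_right. fold (rho m). field. specialize (Hrho1 m). lra.
    left. apply Rinv_0_lt_compat. apply Hrho1. }
  destruct (BWn q d 1) as [psi [ds [Hpsi Hdc]]]. intro k. rewrite Hd1. lra.
  assert (Hds : norm ds = 1).
  { apply (rconv_unique (fun k => norm (d (psi k)))). apply norm_cont; auto.
    apply rconv_ext with (fun _ => 1). intro; rewrite Hd1; auto. apply rconv_const. }
  assert (Ray : forall Rr, 0 <= Rr -> Z (vadd z0 (vscal Rr ds)) /\ F x0 (vadd z0 (vscal Rr ds)) <= c).
  { intros Rr HR. destruct (INR_unbounded Rr) as [K HK].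
    set (mj := fun j => psi (j + K)%nat).
    assert (Hmj : forall j, INR j + INR K <= INR (mj j)).
    { intro j. rewrite <- plus_INR. apply le_INR. exact (si_ge psi Hpsi (j+K)). }
    set (lam := fun j => Rr / rho (mj j)).
    assert (Hlam : forall j, 0 <= lam j < 1 /\ lam j * (INR j + 1) <= Rr).
    { intro j. specialize (Hmj j). specialize (Hrho (mj j)). pose proof (pos_INR j). pose proof (pos_INR K).
      unfold lam. split. split. unfold Rdiv. apply Rmult_le_pos; auto. left; apply Rinv_0_lt_compat; lra.
      apply Rmult_lt_reg_r with (rho (mj j)). lra. unfold Rdiv. rewrite Rmult_assoc, Rinv_l by lra. lra.
      unfold Rdiv. apply Rmult_le_reg_r with (rho (mj j)). lra.
      replace (Rr * / rho (mj j) * (INR j + 1) * rho (mj j)) with (Rr * (INR j + 1)) by (field; lra). nra. }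
    set (Px := fun j => vadd (vscal (lam j) (xs (km (mj j)))) (vscal (1 - lam j) x0)).
    set (Pz := fun j => vadd (vscal (lam j) (zs (km (mj j)))) (vscal (1 - lam j) z0)).
    assert (HPz : forall j, Pz j = vadd z0 (vscal Rr (d (mj j)))).
    { intro j. apply vec_ext. intro i. unfold Pz, d, lam, vadd, vscal, vsub. specialize (Hrho1 (mj j)). field. lra. }
    assert (HZP : forall j, Z (Pz j)). { intro j. apply HZcv; auto. specialize (Hlam j). lra. }
    assert (HFP : forall j, F (Px j) (Pz j) <= c).
    { intro j. eapply Rle_trans. apply Hcv. specialize (Hlam j). lra.
      specialize (Hlam j). specialize (Hcs (km (mj j))). nra. }
    assert (HPxc : vconv Px x0).
    { intros eps He. destruct (INR_unbounded (Rr * Mx / eps)) as [N HNN]. exists N. intros j Hj.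
      assert (E : vsub (Px j) x0 = vscal (lam j) (vsub (xs (km (mj j))) x0)) by (apply vec_ext; intros; unfold Px, vsub, vadd, vscal; ring).
      rewrite E, norm_scal. specialize (Hlam j). rewrite Rabs_right by lra. specialize (HMx (km (mj j))).
      apply le_INR in Hj. pose proof (norm_nonneg _ (vsub (xs (km (mj j))) x0)).
      assert (lam j * norm (vsub (xs (km (mj j))) x0) <= lam j * Mx) by (apply Rmult_le_compat_l; lra).
      assert (lam j * Mx * (INR j + 1) <= Rr * Mx) by nra.
      assert (Rr * Mx < eps * (INR j + 1)). { apply Rmult_lt_reg_r with (/eps). apply Rinv_0_lt_compat; lra.
        replace (eps * (INR j + 1) * / eps) with (INR j + 1) by (field; lra). unfold Rdiv in HNN. lra. }
      assert (lam j * Mx < eps). { apply Rmult_lt_reg_r with (INR j + 1). pose proof (pos_INR j); lra. lra. }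
      lra. }
    assert (HPzc : vconv Pz (vadd z0 (vscal Rr ds))).
    { apply vconv_ext with (fun j => vadd z0 (vscal Rr (d (mj j)))). intro j; rewrite HPz; auto.
      apply vconv_add. apply vconv_const. apply vconv_scal_bdd with (Rabs Rr). intro; lra. apply rconv_const.
      apply (vconv_sub _ (fun k => d (psi k)) ds (fun j => (j + K)%nat)). intro; lia. auto. }
    split. apply (HZcl Pz); auto.
    apply (rconv_le (fun j => F (Px j) (Pz j)) (fun _ => c)); auto.
    apply (F_seq_cont _ _ F x0 _ (Gx x0 (vadd z0 (vscal Rr ds))) (Gz x0 (vadd z0 (vscal Rr ds)))); auto. apply rconv_const. }
  destruct (compact_bounded _ _ (Hinf c)) as [M HM].
  destruct (INR_unbounded (M + norm z0)) as [j Hj].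
  destruct (Ray (INR j) (pos_INR j)) as [R1 R2].
  specialize (HM _ (conj R1 R2)). pose proof (norm_sub_le _ (vadd z0 (vscal (INR j) ds)) z0).
  assert (E : vsub (vadd z0 (vscal (INR j) ds)) z0 = vscal (INR j) ds) by (apply vec_ext; intros; unfold vsub, vadd, vscal; ring).
  rewrite E, norm_scal, Hds, Rabs_right in H by (apply Rle_ge, pos_INR). lra.
Qed.


Lemma X_sub_conv : forall n (X : vec n -> Prop) p, X p -> conv X p.
Proof. intros. exists ((1, p) :: nil). split. constructor; [simpl; split; [lra|auto]|constructor].
  split. simpl. ring. apply vec_ext. intros. simpl. unfold vadd, vscal, vzero. ring. Qed.

Lemma stat_conv : forall n (X : vec n -> Prop) g xb, (forall y, X y -> 0 <= dot g (vsub y xb)) ->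
  forall y, conv X y -> 0 <= dot g (vsub y xb).
Proof. intros n X g xb H y [l [HF [HS Hy]]]. rewrite sumw_eq in HS. subst y. rewrite dot_sub_r, dot_lcomb.
  replace (dot g xb) with (Ssum fst l * dot g xb) by (rewrite HS; ring). rewrite (Rmult_comm (Ssum fst l)).
  rewrite <- Ssum_scal. 
  assert (Ssum (fun ap => dot g xb * fst ap) l <= Ssum (fun ap => fst ap * dot g (snd ap)) l).
  { apply Ssum_le. intros a Ha. rewrite Forall_forall in HF. destruct (HF a Ha). specialize (H _ H1).
    rewrite dot_sub_r in H. nra. }
  lra. Qed.

Lemma Rabs_dot_le : forall n (u v : vec n) B, norm v <= B -> Rabs (dot u v) <= norm u * B.
Proof. intros. eapply Rle_trans. apply cauchy_schwarz. apply Rmult_le_compat_l; auto. apply norm_nonneg. Qed.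

Lemma dot_le_bound : forall n (u v : vec n) B, norm v <= B -> dot u v <= norm u * B.
Proof. intros. eapply Rle_trans. apply Rle_abs. apply Rabs_dot_le; auto. Qed.

Lemma descent_est : forall n q (F : vec n -> vec q -> R) (xb : vec n) (zb : vec q) gb gzb dl Md Dl
  (xk dk Gk y : vec n) (zk : vec q),
  (forall x' z', pnorm (vsub x' xb) (vsub z' zb) < Dl ->
     Rabs (F x' z' - F xb zb - dot gb (vsub x' xb) - dot gzb (vsub z' zb)) <= (dl / (16 * Md)) * pnorm (vsub x' xb) (vsub z' zb)) ->
  dl > 0 -> Md > 0 -> Dl > 0 ->
  dot gb (vsub y xb) = - dl -> norm dk <= Md -> norm (vsub y xk) <= Md ->
  dot Gk dk <= dot Gk (vsub y xk) -> norm (vsub Gk gb) < dl / (8 * Md) ->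
  norm (vsub xk xb) * (norm gb + 1) < dl / 4 ->
  norm (vsub xk xb) < Rmin 1 (Dl / (2 * Md)) * Md / 4 -> norm (vsub zk zb) < Rmin 1 (Dl / (2 * Md)) * Md / 4 ->
  F (vadd xk (vscal (Rmin 1 (Dl / (2 * Md))) dk)) zk <= F xk zk - Rmin 1 (Dl / (2 * Md)) * dl / 4.
Proof. intros n q F xb zb gb gzb dl Md Dl xk dk Gk y zk Hd Hdl HMd HDl Hy Hdk Hyk Harg HG Hx1 Hx2 Hz2.
  set (al := Rmin 1 (Dl / (2 * Md))) in *.
  assert (Hal : 0 < al <= 1 /\ al * Md <= Dl / 2).
  { unfold al. split. split. apply Rmin_pos. lra. apply Rdiv_lt_0_compat; lra. apply Rmin_l.
    pose proof (Rmin_r 1 (Dl / (2 * Md))). apply Rmult_le_compat_r with (r := Md) in H; [|lra].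
    replace (Dl / (2 * Md) * Md) with (Dl / 2) in H by (field; lra). lra. }
  pose proof (norm_nonneg _ gb) as Hgb. pose proof (norm_nonneg _ (vsub xk xb)) as Hnx. pose proof (norm_nonneg _ (vsub zk zb)) as Hnz.
  pose proof (norm_nonneg _ (vsub Gk gb)) as HnG.
  assert (HGd : dot gb dk <= - dl / 2).
  { assert (E1 : dot gb dk = dot Gk dk - dot (vsub Gk gb) dk) by (rewrite dot_sub_l; ring).
    assert (E2 : dot Gk (vsub y xk) = dot gb (vsub y xb) + dot gb (vsub xb xk) + dot (vsub Gk gb) (vsub y xk)).
    { rewrite !dot_sub_l, !dot_sub_r. ring. }
    pose proof (Rabs_dot_le _ (vsub Gk gb) dk Md Hdk) as A1. apply Rabs_le_inv in A1.
    pose proof (dot_le_bound _ (vsub Gk gb) (vsub y xk) Md Hyk) as A2.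
    pose proof (dot_le_bound _ gb (vsub xb xk) (norm (vsub xk xb)) ltac:(rewrite norm_opp_sub; lra)) as A3.
    assert (A4 : norm (vsub Gk gb) * Md < dl / 8).
    { apply Rmult_lt_compat_r with (r := Md) in HG; [|lra]. replace (dl / (8 * Md) * Md) with (dl / 8) in HG by (field; lra). lra. }
    assert (A5 : norm gb * norm (vsub xk xb) < dl / 4) by nra.
    lra. }
  set (eps := dl / (16 * Md)).
  assert (Heps : eps > 0) by (unfold eps; apply Rdiv_lt_0_compat; lra).
  set (s := norm (vsub xk xb) + norm (vsub zk zb)).
  assert (Hs : s < al * Md / 2) by (unfold s; lra).
  assert (R1 : pnorm (vsub xk xb) (vsub zk zb) <= s) by apply pnorm_le.
  assert (E3 : vsub (vadd xk (vscal al dk)) xb = vadd (vsub xk xb) (vscal al dk)) by (apply vec_ext; intros; unfold vadd, vsub, vscal; ring).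
  assert (R2 : pnorm (vsub (vadd xk (vscal al dk)) xb) (vsub zk zb) <= s + al * Md).
  { eapply Rle_trans. apply pnorm_le. rewrite E3. pose proof (norm_triangle _ (vsub xk xb) (vscal al dk)).
    rewrite norm_scal, Rabs_right in H by lra. assert (al * norm dk <= al * Md) by (apply Rmult_le_compat_l; lra). unfold s. lra. }
  pose proof (pnorm_nonneg _ _ (vsub xk xb) (vsub zk zb)) as P1n.
  pose proof (pnorm_nonneg _ _ (vsub (vadd xk (vscal al dk)) xb) (vsub zk zb)) as P2n.
  assert (D1 := Hd xk zk ltac:(lra)).
  assert (D2 := Hd (vadd xk (vscal al dk)) zk ltac:(lra)).
  rewrite E3, dot_add_r, dot_scal_r in D2. fold eps in D1, D2.
  apply Rabs_le_inv in D1. apply Rabs_le_inv in D2.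
  assert (eps * pnorm (vsub xk xb) (vsub zk zb) <= eps * s) by (apply Rmult_le_compat_l; lra).
  assert (eps * pnorm (vadd (vsub xk xb) (vscal al dk)) (vsub zk zb) <= eps * (s + al * Md)).
  { apply Rmult_le_compat_l. lra. rewrite <- E3. auto. }
  assert (eps * (al * Md) = al * dl / 16) by (unfold eps; field; lra).
  assert (eps * s <= al * dl / 32).
  { apply Rle_trans with (eps * (al * Md / 2)). apply Rmult_le_compat_l; lra. unfold eps. replace (dl / (16 * Md) * (al * Md / 2)) with (al * dl / 32) by (field; lra). lra. }
  assert (al * dot gb dk <= al * (- dl / 2)) by (apply Rmult_le_compat_l; lra).
  nra. Qed.


Theorem proposition3
  (n q : nat) (F : vec n -> vec q -> R)
  (Gx : vec n -> vec q -> vec n) (Gz : vec n -> vec q -> vec q)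
  (X : vec n -> Prop) (Z : vec q -> Prop) (tmax : nat)
  (x : nat -> vec n) (z : nat -> vec q) (xhat : nat -> vec n)
  (D : nat -> vec n -> Prop)
  (xt : nat -> nat -> vec n) (zt : nat -> nat -> vec q)
  (* problem data *)
  (HFconv : jointly_convex F)
  (HFC1 : C1_with_gradient F Gx Gz)
  (HXne : nonempty X) (HXcomp : is_compact X)
  (HZne : nonempty Z) (HZcl : is_closed Z) (HZcv : is_convex Z)
  (HinfC : forall xx, conv X xx -> inf_compact Z (fun zz => F xx zz))
  (Htmax : (1 <= tmax)%nat)
  (* initialization *)
  (Hx0 : conv X (x 0%nat))
  (Hz0 : is_argmin Z (fun zz => F (x 0%nat) zz) (z 0%nat))
  (HD0ne : nonempty (D 0%nat)) (HD0cl : is_closed (D 0%nat))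
  (HD0cv : is_convex (D 0%nat)) (HD0sub : subset (D 0%nat) (conv X))
  (* SDM-GS iterations: inner Gauss-Seidel loop *)
  (Hin0x : forall k, xt k 0%nat = x k)
  (Hin0z : forall k, zt k 0%nat = z k)
  (Hinx : forall k t, (1 <= t <= tmax)%nat ->
     is_argmin (D k) (fun xx => F xx (zt k (t - 1)%nat)) (xt k t))
  (Hinz : forall k t, (1 <= t <= tmax)%nat ->
     is_argmin Z (fun zz => F (xt k t) zz) (zt k t))
  (Hxnext : forall k, x (S k) = xt k tmax)
  (Hznext : forall k, z (S k) = zt k tmax)
  (* linearization step *)
  (Hxhat : forall k,
     is_argmin X (fun xx => dot (Gx (x (S k)) (z (S k))) (vsub xx (x (S k)))) (xhat (S k)))
  (* update of the inner approximation *)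
  (HDcl : forall k, is_closed (D (S k)))
  (HDcv : forall k, is_convex (D (S k)))
  (HDseg : forall k, subset (segment (x (S k)) (xhat (S k))) (D (S k)))
  (HDsub : forall k, subset (D (S k)) (conv X)) :
  (exists xb zb, is_limit_point x z xb zb) /\
  (forall xb zb, is_limit_point x z xb zb -> is_optimal F (conv X) Z xb zb).
Proof.
  destruct HFC1 as [Hgrad [HGxc HGzc]].
  set (FF := fun k => F (x k) (z k)).
  assert (Hzarg : forall k, is_argmin Z (fun zz => F (x k) zz) (z k)).
  { intro k. destruct k. auto. rewrite Hznext, Hxnext. apply Hinz. lia. }
  assert (HZk : forall k, Z (z k)) by (intro k; apply Hzarg).
  assert (HxD : forall k, D (S k) (x (S k))).
  { intro k. apply HDseg. exists 0. split. lra. apply vec_ext. intros. unfold vadd, vscal, vsub. ring. }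
  assert (HxC : forall k, conv X (x k)). { intro k. destruct k. auto. apply (HDsub k). apply HxD. }
  assert (Hchain : forall k t, (1 <= t <= tmax)%nat -> F (xt k t) (zt k t) <= F (xt k 1%nat) (z k)).
  { intros k t. induction t as [|t IH]; intro Ht. lia.
    destruct t as [|t].
    - destruct (Hinz k 1%nat ltac:(lia)) as [_ H]. specialize (H (z k) (HZk k)). simpl in H. auto.
    - specialize (IH ltac:(lia)).
      destruct (Hinz k (S (S t)) ltac:(lia)) as [_ H1]. destruct (Hinz k (S t) ltac:(lia)) as [H2 _].
      specialize (H1 _ H2). destruct (Hinx k (S (S t)) ltac:(lia)) as [_ H3]. destruct (Hinx k (S t) ltac:(lia)) as [H4 _].
      specialize (H3 _ H4). simpl in H3. replace (S t - 0)%nat with (S t) in H3 by lia. lra. }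
  assert (Hdesc : forall k y, D k y -> FF (S k) <= F y (z k)).
  { intros k y Hy. unfold FF. rewrite Hxnext, Hznext. eapply Rle_trans. apply Hchain. lia.
    destruct (Hinx k 1%nat ltac:(lia)) as [_ H]. simpl in H. rewrite Hin0z in H. auto. }
  assert (Hmono : forall k, FF (S (S k)) <= FF (S k)) by (intro k; apply Hdesc; apply HxD).
  assert (Hmono2 : forall k m, (1 <= k <= m)%nat -> FF m <= FF k).
  { intros k m Hkm. induction m. lia. destruct (Nat.eq_dec k (S m)). subst; lra.
    destruct m. lia. specialize (IHm ltac:(lia)). specialize (Hmono m). lra. }
  assert (HCcomp : is_compact (conv X)) by (apply conv_compact; auto).
  assert (HCcl : is_closed (conv X)) by (apply compact_closed; auto).
  destruct (compact_bounded _ _ HCcomp) as [Mx HMx].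
  assert (HMx0 : 0 <= Mx) by (specialize (HMx _ Hx0); pose proof (norm_nonneg _ (x O)); lra).
  assert (B1 : inf_compact Z (fun zz => F (x 1%nat) zz)) by (apply HinfC; auto).
  assert (B2 : F (x 1%nat) (z 1%nat) <= FF 1%nat) by (unfold FF; lra).
  assert (B3 : forall k, norm (vsub (x (S k)) (x 1%nat)) <= 2 * Mx).
  { intro k. eapply Rle_trans. apply norm_sub_le. specialize (HMx _ (HxC (S k))) as H1. specialize (HMx _ (HxC 1%nat)). lra. }
  assert (B4 : forall k, F (x (S k)) (z (S k)) <= FF 1%nat) by (intro k; apply (Hmono2 1%nat (S k)); lia).
  destruct (z_bounded n q F Gx Gz Z (x 1%nat) (z 1%nat) (fun k => x (S k)) (fun k => z (S k)) (2 * Mx) (FF 1%nat)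
    Hgrad HFconv HZcl HZcv B1 (HZk 1%nat) B2 B3 (fun k => HZk (S k)) B4) as [Mz HMz].
  assert (HzB : forall k, norm (z k) <= Rmax (norm (z O)) (Mz + norm (z 1%nat))).
  { intro k. destruct k. apply Rmax_l. eapply Rle_trans. 2: apply Rmax_r. specialize (HMz k).
    pose proof (norm_sub_triangle _ (z (S k)) (z 1%nat) vzero).
    assert (A : forall v : vec q, vsub v vzero = v) by (intros; apply vec_ext; intros; unfold vsub, vzero; ring).
    rewrite !A in H. simpl in *. lra. }
  split.
  - destruct (HCcomp x HxC) as [phi1 [xb [Hp1 [Hxb Hc1]]]].
    destruct (BWn q (fun k => z (phi1 k)) _ (fun k => HzB (phi1 k))) as [phi2 [zb [Hp2 Hc2]]].
    exists xb, zb, (fun k => phi1 (phi2 k)). split. apply si_comp; auto. split; auto.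
    apply (vconv_sub _ (fun k => x (phi1 k))); auto.
  - intros xb zb [phi [Hphi [Hxc Hzc]]].
    assert (HxbC : conv X xb) by (apply (HCcl (fun k => x (phi k))); auto).
    assert (HzbZ : Z zb) by (apply (HZcl (fun k => z (phi k))); auto).
    set (gb := Gx xb zb). set (gzb := Gz xb zb). set (Fb := F xb zb).
    assert (HFb : rconv (fun k => FF (phi k)) Fb) by (apply (F_seq_cont _ _ F xb zb gb gzb); auto).
    assert (Hzopt : forall zz, Z zz -> Fb <= F xb zz).
    { intros zz Hzz. apply (rconv_le (fun k => FF (phi k)) (fun k => F (x (phi k)) zz)); auto.
      apply (F_seq_cont _ _ F xb zz (Gx xb zz) (Gz xb zz)); auto. apply vconv_const.
      intro k. apply Hzarg; auto. }
    assert (HFlow : forall k, (1 <= k)%nat -> Fb <= FF k).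
    { intros k Hk. apply (rconv_le_ev (fun j => FF (phi j)) (fun _ => FF k) Fb (FF k) k); auto. apply rconv_const.
      intros j Hj. apply Hmono2. pose proof (si_ge phi Hphi j). lia. }
    assert (Hzstat : forall zz, Z zz -> 0 <= dot gzb (vsub zz zb)).
    { intros zz Hzz. apply NNPP. intro HN. set (eta := - dot gzb (vsub zz zb)). assert (Heta : eta > 0) by (unfold eta; lra).
      destruct (dir_deriv _ _ F xb zb gb gzb (Hgrad xb zb) vzero (vsub zz zb) (eta / 2)) as [a0 [Ha0 Ha0']]. lra.
      set (a := Rmin a0 1). assert (Ha : 0 < a <= a0) by (unfold a; split; [apply Rmin_pos; lra|apply Rmin_l]).
      specialize (Ha0' a Ha). rewrite dot_zero_r in Ha0'.
      assert (E1 : vadd xb (vscal a vzero) = xb) by (apply vec_ext; intros; unfold vadd, vscal, vzero; ring).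
      assert (E2 : vadd zb (vscal a (vsub zz zb)) = vadd (vscal a zz) (vscal (1 - a) zb)) by (apply vec_ext; intros; unfold vadd, vscal, vsub; ring).
      rewrite E1, E2 in Ha0'. apply Rabs_le_inv in Ha0'.
      assert (Z (vadd (vscal a zz) (vscal (1 - a) zb))). { apply HZcv; auto. pose proof (Rmin_r a0 1). fold a in H. lra. }
      specialize (Hzopt _ H). assert (a * (0 + dot gzb (vsub zz zb)) = - (a * eta)) by (unfold eta; ring). assert (a * eta > 0) by (apply Rmult_lt_0_compat; lra). unfold Fb in *. lra. }
    assert (Hxstat : forall yy, X yy -> 0 <= dot gb (vsub yy xb)).
    { intros yy Hyy. apply NNPP. intro HN. set (dl := - dot gb (vsub yy xb)). assert (Hdl : dl > 0) by (unfold dl; lra).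
      set (Md := 2 * Mx + 1). assert (HMd : Md > 0) by (unfold Md; lra).
      destruct (Hgrad xb zb (dl / (16 * Md))) as [Dl [HDl HDl']]. apply Rdiv_lt_0_compat; lra.
      set (al := Rmin 1 (Dl / (2 * Md))). assert (Hal : al > 0) by (unfold al; apply Rmin_pos; [lra|apply Rdiv_lt_0_compat; lra]).
      assert (Claim : forall m, (1 <= m)%nat -> norm (vsub (Gx (x m) (z m)) gb) < dl / (8 * Md) ->
         norm (vsub (x m) xb) * (norm gb + 1) < dl / 4 -> norm (vsub (x m) xb) < al * Md / 4 ->
         norm (vsub (z m) zb) < al * Md / 4 -> FF (S m) <= FF m - al * dl / 4).
      { intros m Hm C1 C2 C3 C4. destruct m as [|m]. lia.
        eapply Rle_trans. apply (Hdesc (S m) (vadd (x (S m)) (vscal al (vsub (xhat (S m)) (x (S m)))))).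
        { apply HDseg. exists al. split. split. lra. apply Rmin_l. reflexivity. }
        assert (A1 : forall x' z', pnorm (vsub x' xb) (vsub z' zb) < Dl ->
          Rabs (F x' z' - F xb zb - dot gb (vsub x' xb) - dot gzb (vsub z' zb)) <= (dl / (16 * Md)) * pnorm (vsub x' xb) (vsub z' zb)).
        { intros x' z' Hp. apply HDl'. auto. }
        assert (A2 : dot gb (vsub yy xb) = - dl) by (unfold dl; ring).
        assert (A3 : norm (vsub (xhat (S m)) (x (S m))) <= Md).
        { destruct (Hxhat m) as [Hxh _]. eapply Rle_trans. apply norm_sub_le. pose proof (HMx _ (X_sub_conv _ _ _ Hxh)). pose proof (HMx _ (HxC (S m))). unfold Md. lra. }
        assert (A4 : norm (vsub yy (x (S m))) <= Md).
        { eapply Rle_trans. apply norm_sub_le. pose proof (HMx _ (X_sub_conv _ _ _ Hyy)). pose proof (HMx _ (HxC (S m))). unfold Md. lra. }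
        assert (A5 : dot (Gx (x (S m)) (z (S m))) (vsub (xhat (S m)) (x (S m))) <= dot (Gx (x (S m)) (z (S m))) (vsub yy (x (S m)))).
        { destruct (Hxhat m) as [_ Hxh]. apply Hxh. auto. }
        exact (descent_est n q F xb zb gb gzb dl Md Dl (x (S m)) (vsub (xhat (S m)) (x (S m))) (Gx (x (S m)) (z (S m))) yy (z (S m))
          A1 Hdl HMd HDl A2 A3 A4 A5 C1 C2 C3 C4). }
      assert (HGc : vconv (fun k => Gx (x (phi k)) (z (phi k))) gb) by (apply G_seq_cont; auto).
      destruct (HGc (dl / (8 * Md))) as [N1 HN1]. apply Rdiv_lt_0_compat; lra.
      destruct (Hxc (Rmin (dl / 4 / (norm gb + 1)) (al * Md / 4))) as [N2 HN2].
      { pose proof (norm_nonneg _ gb). apply Rmin_pos; apply Rdiv_lt_0_compat; try lra. apply Rmult_lt_0_compat; lra. }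
      destruct (Hzc (al * Md / 4)) as [N3 HN3]. { apply Rdiv_lt_0_compat; try lra. apply Rmult_lt_0_compat; lra. }
      destruct (HFb (al * dl / 4)) as [N4 HN4]. { apply Rdiv_lt_0_compat; try lra. apply Rmult_lt_0_compat; lra. }
      set (k := S (max (max N1 N2) (max N3 N4))).
      specialize (HN1 k ltac:(unfold k; lia)). specialize (HN2 k ltac:(unfold k; lia)). specialize (HN3 k ltac:(unfold k; lia)). specialize (HN4 k ltac:(unfold k; lia)).
      assert (Hk1 : (1 <= phi k)%nat) by (pose proof (si_ge phi Hphi k); unfold k in *; lia).
      pose proof (Rmin_l (dl / 4 / (norm gb + 1)) (al * Md / 4)). pose proof (Rmin_r (dl / 4 / (norm gb + 1)) (al * Md / 4)).
      pose proof (norm_nonneg _ gb).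
      assert (C2 : norm (vsub (x (phi k)) xb) * (norm gb + 1) < dl / 4).
      { apply Rmult_lt_reg_r with (/ (norm gb + 1)). apply Rinv_0_lt_compat; lra.
        rewrite Rmult_assoc, Rinv_r by lra. unfold Rdiv in *. lra. }
      specialize (Claim (phi k) Hk1 HN1 C2 ltac:(lra) HN3).
      pose proof (HFlow (S (phi k)) ltac:(lia)). apply Rabs_def2 in HN4. lra. }
    assert (HxC2 := stat_conv n X gb xb Hxstat).
    split; auto. split; auto. intros xx zz Hxx Hzz. fold Fb.
    apply NNPP. intro HN. set (D0 := Fb - F xx zz). assert (HD0 : D0 > 0) by (unfold D0; lra).
    destruct (dir_deriv _ _ F xb zb gb gzb (Hgrad xb zb) (vsub xx xb) (vsub zz zb) (D0 / 2)) as [a0 [Ha0 Ha0']]. lra.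
    set (a := Rmin a0 1). assert (Ha : 0 < a <= a0) by (unfold a; split; [apply Rmin_pos; lra|apply Rmin_l]).
    assert (Ha1 : a <= 1) by apply Rmin_r.
    specialize (Ha0' a Ha).
    assert (E1 : vadd xb (vscal a (vsub xx xb)) = vadd (vscal a xx) (vscal (1 - a) xb)) by (apply vec_ext; intros; unfold vadd, vscal, vsub; ring).
    assert (E2 : vadd zb (vscal a (vsub zz zb)) = vadd (vscal a zz) (vscal (1 - a) zb)) by (apply vec_ext; intros; unfold vadd, vscal, vsub; ring).
    rewrite E1, E2 in Ha0'. apply Rabs_le_inv in Ha0'.
    pose proof (HFconv xx zz xb zb a ltac:(lra)).
    pose proof (HxC2 xx Hxx). pose proof (Hzstat zz Hzz).
    assert (a * (dot gb (vsub xx xb) + dot gzb (vsub zz zb)) >= 0) by (apply Rle_ge; apply Rmult_le_pos; lra).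
    assert (a * F xx zz + (1 - a) * F xb zb = F xb zb - a * D0) by (unfold D0, Fb; ring).
    assert (a * D0 > 0) by (apply Rmult_lt_0_compat; lra).
    assert (D0 / 2 * a = (a * D0) / 2) by field.
    lra.
Qed.
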